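(* Let $(\lambda,\vartheta,\zeta_0)$ be fluid model data as in the context with $z_0>0$, and suppose $F_0(x,y)=\mathbf P(B^0\ge x;D^0\ge y)$ satisfies $|F_0(x,y)-F_0(x,y')|\le L|y-y'|$ for all $x,y,y'$. Let $\zeta(\cdot)$ be a measure valued fluid model solution with total mass $z(\cdot)$, let $S(0,s)=\int_0^sz(u)^{-1}du$, $\widetilde S(t)=\inf\{s:S(0,s)\ge t\}$, and $\widetilde\zeta(t)(x,y)=\zeta(\widetilde S(t))([x,\infty]\times[y,\infty])$. Then for all $x,y,y'\ge0$ and all $t\ge0$, $$|\widetilde\zeta(t)(x,y)-\widetilde\zeta(t)(x,y')|\le(z_0L+\lambda)|y-y'|.$$
   Context: $\overline{\mathbb R}_+=[0,\infty]$; $\mathbf M_1$ the finite nonnegative Borel measures on $\overline{\mathbb R}_+^2$ with the weak topology. Fluid model data: $\lambda>0$; $\vartheta$ a Borel probability measure on $\overline{\mathbb R}_+^2$ with $\vartheta(\{0\}\times\overline{\mathbb R}_+)=\vartheta(\overline{\mathbb R}_+\times\{0\})=\vartheta(\{(\infty,\infty)\})=0$, $(B,D)$ a random pair with law $\vartheta$, $\rho=\lambda\mathbf E[B]>1$; $\zeta_0\in\mathbf M_1$ with marginals free of atoms in $[0,\infty)$, total mass $z_0$, and $(B^0,D^0)$ with law $\zeta_0/z_0$. Corner sets $\mathcal C=\{[x,\infty)\times[y,\infty):x,y\in[0,\infty)\}\cup\{[x,\infty]\times[y,\infty]:x,y\in\overline{\mathbb R}_+\}$. A measure valued fluid model solution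 is a continuous $\zeta:[0,\infty)\to\mathbf M_1$ with total mass $z(t)$, $S(u,v)=\int_u^vz(s)^{-1}ds$, such that $\inf_{t>a}z(t)>0$ for all $a>0$ and $\zeta(t)(C)=\zeta_0(C+(S(0,t),t))+\lambda\int_0^t\vartheta(C+(S(s,t),t-s))ds$ for $C\in\mathcal C$, $t\ge0$ ($A+w=\{a+w:a\in A\}$). *)

(* Defs.v *)
From HB Require Import structures.
From mathcomp Require Import all_boot all_order all_algebra.
From mathcomp Require Import all_classical all_reals all_analysis.
From mathcomp Require Import measurable_realfun.
Set Implicit Arguments. Unset Strict Implicit. Unset Printing Implicit Defensive.
Import Order.TTheory GRing.Theory Num.Theory.
Import numFieldNormedType.Exports.
Local Open Scope classical_set_scope.
Local Open Scope ring_scope.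

Notation ST R := (\bar R * \bar R)%type.

Definition Rp2 (R : realType) : set (ST R) :=
  [set p | (0 <= p.1)%E /\ (0 <= p.2)%E].

Definition corner (R : realType) (C : set (ST R)) : Prop :=
  (exists x y : R, 0 <= x /\ 0 <= y /\
     C = [set p | (x%:E <= p.1 < +oo)%E /\ (y%:E <= p.2 < +oo)%E])
  \/
  (exists x y : \bar R, (0 <= x)%E /\ (0 <= y)%E /\
     C = [set p | (x <= p.1)%E /\ (y <= p.2)%E]).

Definition shift (R : realType) (C : set (ST R)) (a b : R) : set (ST R) :=
  [set ((p.1 + a%:E)%E, (p.2 + b%:E)%E) | p in C].

Definition closed_corner (R : realType) (x y : R) : set (ST R) :=
  [set p | (x%:E <= p.1)%E /\ (y%:E <= p.2)%E].

Definition mass (R : realType) (zeta : R -> {finite_measure set (ST R) -> \bar R})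
  (t : R) : R := fine (zeta t setT).

Definition Sfun (R : realType) (zeta : R -> {finite_measure set (ST R) -> \bar R})
  (u v : R) : R :=
  fine (\int[@lebesgue_measure R]_(s in `[u, v]) ((mass zeta s)^-1)%:E)%E.

Definition weakly_continuous (R : realType)
  (zeta : R -> {finite_measure set (ST R) -> \bar R}) : Prop :=
  forall f : ST R -> R,
    measurable_fun setT f ->
    {within @Rp2 R, continuous f} ->
    (exists M : R, forall p, `|f p| <= M) ->
    {within [set t : R | 0 <= t],
       continuous (fun t => fine (\int[zeta t]_(p in @Rp2 R) (f p)%:E)%E)}.

Definition fluid_solution (R : realType) (lambda : R)
  (theta : probability (ST R) R) (zeta0 : {finite_measure set (ST R) -> \bar R})
  (zeta : R -> {finite_measure set (ST R) -> \bar R}) : Prop :=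
  (forall t, 0 <= t -> zeta t (~` @Rp2 R) = 0%E) /\
  weakly_continuous zeta /\
  (forall a : R, 0 < a -> exists c : R, 0 < c /\ forall t, a < t -> c <= mass zeta t) /\
  (forall C t, corner C -> 0 <= t ->
     zeta t C =
       (zeta0 (shift C (Sfun zeta 0%R t) t) +
        lambda%:E * \int[@lebesgue_measure R]_(s in `[0%R, t])
                      theta (shift C (Sfun zeta s t) (t - s)%R))%E).

Definition fluid_data (R : realType) (lambda : R)
  (theta : probability (ST R) R) (zeta0 : {finite_measure set (ST R) -> \bar R}) : Prop :=
  0 < lambda /\
  theta (~` @Rp2 R) = 0%E /\
  theta [set p | p.1 = 0%E] = 0%E /\
  theta [set p | p.2 = 0%E] = 0%E /\
  theta [set (+oo%E, +oo%E)] = 0%E /\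
  (1 < lambda%:E * \int[theta]_(p in @Rp2 R) p.1)%E /\
  zeta0 (~` @Rp2 R) = 0%E /\
  (forall x : R, 0 <= x -> zeta0 [set p | p.1 = x%:E] = 0%E) /\
  (forall x : R, 0 <= x -> zeta0 [set p | p.2 = x%:E] = 0%E).

Definition Stilde (R : realType) (zeta : R -> {finite_measure set (ST R) -> \bar R})
  (t : R) : R := inf [set s : R | 0 <= s /\ t <= Sfun zeta 0 s].

(* Main.v *)
Require Import Defs.
From HB Require Import structures.
From mathcomp Require Import all_boot all_order all_algebra.
From mathcomp Require Import all_classical all_reals all_analysis.
From mathcomp Require Import measurable_realfun.
From mathcomp Require Import ring lra.
Import Order.TTheory GRing.Theory Num.Theory.
Import numFieldNormedType.Exports.
Local Open Scope classical_set_scope.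
Local Open Scope ring_scope.

Lemma ege_meas (R : realType) (a : \bar R) : measurable [set x : \bar R | (a <= x)%E].
Proof.
have -> : [set x : \bar R | (a <= x)%E] = [set` Interval (BLeft a) (BRight +oo%E)].
  by apply/seteqP; split => x /=; rewrite in_itv /= leey andbT.
exact: emeasurable_itv.
Qed.

Lemma cc_meas (R : realType) (a b : \bar R) :
  measurable [set p : ST R | (a <= p.1)%E /\ (b <= p.2)%E].
Proof.
have -> : [set p : ST R | (a <= p.1)%E /\ (b <= p.2)%E] =
  [set x : \bar R | (a <= x)%E] `*` [set x : \bar R | (b <= x)%E] by [].
by apply: measurableX; exact: ege_meas.
Qed.

Lemma shift_cc (R : realType) (x y u v : R) :
  Defs.shift (closed_corner x y) u v = closed_corner (x + u) (y + v).
Proof.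
apply/seteqP; split.
  move=> _ [p [hx hy] <-]; split => /=; rewrite EFinD; exact: leeD2r.
move=> [p1 p2] [/= h1 h2]; exists ((p1 - u%:E)%E, (p2 - v%:E)%E).
  by split; rewrite /= EFinN leeBrDr // -EFinD.
by rewrite /= !EFinN !subeK.
Qed.

Lemma corner_cc (R : realType) (x y : R) : 0 <= x -> 0 <= y -> corner (closed_corner x y).
Proof. by move=> x0 y0; right; exists x%:E, y%:E; rewrite !lee_fin. Qed.

Lemma Rp2_cc (R : realType) : @Rp2 R = closed_corner 0 0.
Proof. by []. Qed.

Lemma null_compl (R : realType) (mu : {finite_measure set (ST R) -> \bar R}) :
  mu (~` @Rp2 R) = 0%E -> mu setT = mu (@Rp2 R).
Proof.
move=> h; rewrite (measureDI mu (A:=setT) (B:=@Rp2 R)) //; last by rewrite Rp2_cc; exact: cc_meas.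
rewrite setTD setTI -[X in _ = X]add0e; congr (_ + _)%E; exact: h.
Qed.

Lemma mass_lb (R : realType) (lambda : R)
  (theta : probability (ST R) R) (zeta0 : {finite_measure set (ST R) -> \bar R})
  (zeta : R -> {finite_measure set (ST R) -> \bar R}) :
  fluid_data lambda theta zeta0 -> 0 < fine (zeta0 setT) ->
  fluid_solution lambda theta zeta0 zeta ->
  exists m : R, 0 < m /\ forall t, 0 <= t -> m <= mass zeta t.
Proof.
move=> [lam0 [_ [_ [_ [_ [_ [z0c _]]]]]]] m0p [hsupp [hwc [hlow heq]]].
set m0 := fine (zeta0 setT).
have mRp2 : measurable (@Rp2 R) by rewrite Rp2_cc; exact: cc_meas.
pose F t := fine (\int[zeta t]_(p in @Rp2 R) ((fun _ => 1%R) p)%:E)%E.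
have FE : forall t, 0 <= t -> F t = mass zeta t.
  move=> t t0; rewrite /F /mass.
  rewrite integral_cst // mul1e null_compl //; exact: hsupp.
have S00 : Sfun zeta 0 0 = 0.
  rewrite /Sfun (@integral_Sset1 _ _ _ 0) //.
  by move=> u /=; rewrite in_itv /= => /andP[? ?]; apply/eqP; rewrite eq_le; apply/andP.
have F0 : F 0 = m0.
  rewrite FE // /mass null_compl; last exact: hsupp.
  rewrite /m0 (@null_compl R zeta0 z0c) Rp2_cc heq //; last exact: corner_cc.
  rewrite (@integral_Sset1 _ _ _ 0); last first.
    by move=> u /=; rewrite in_itv /= => /andP[? ?]; apply/eqP; rewrite eq_le; apply/andP.
  by rewrite mule0 adde0 shift_cc S00 !addr0.
have cF : {within [set t : R | 0 <= t], continuous F}.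
  apply: hwc.
  - exact: measurable_cst.
  - exact: cst_continuous.
  - by exists 1 => p; rewrite normr1.
have E : [set t : R | 0 <= t] = [set` `[0, +oo[] .
  by apply/seteqP; split => t; rewrite /= in_itv /= andbT.
move: cF; rewrite E => /continuous_within_itvcyP [_ cF0].
have := @cvgr_gt R _ _ _ F (F 0) cF0 (m0 / 2).
rewrite F0 ltr_pdivrMr // ltr_pMr // ltr1n => /(_ _ isT).
rewrite /at_right near_withinE => -[r /= r0 Hr].
have [c [c0 hc]] := hlow (r / 2) (divr_gt0 r0 (ltr0Sn _ _)).
exists (Num.min (m0 / 2) c); split; first by rewrite lt_min c0 divr_gt0.
move=> t t0; rewrite ge_min.
have [rt|tr] := ltP (r / 2) t.
  by apply/orP; right; apply: hc; lra.
apply/orP; left.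
have [->|tn0] := eqVneq t 0.
  by rewrite -FE // F0 ler_pdivrMr // ler_pMr // ler1n.
rewrite -FE // ltW // Hr /=.
  by [].
by rewrite sub0r normrN ger0_norm //; lra.
by rewrite lt_neqAle eq_sym tn0 t0.
Qed.
Lemma le_int_nm d (T : measurableType d) (R : realType) (mu : {measure set T -> \bar R})
  (D : set T) (f g : T -> \bar R) :
  (forall x, D x -> (0 <= f x)%E) -> (forall x, D x -> (f x <= g x)%E) ->
  (\int[mu]_(x in D) f x <= \int[mu]_(x in D) g x)%E.
Proof.
move=> f0 fg.
rewrite !ge0_integralE //; last by move=> x Dx; apply: le_trans (fg x Dx); exact: f0.
apply: le_ereal_sup => _ [h hf <-]; exists h => // x.
apply: le_trans (hf x) _; rewrite /patch; case: ifP => // /[!inE] Dx.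
exact: fg.
Qed.

Lemma sub_int_nm d (T : measurableType d) (R : realType) (mu : {measure set T -> \bar R})
  (A B : set T) (f : T -> \bar R) :
  A `<=` B -> (forall x, B x -> (0 <= f x)%E) ->
  (\int[mu]_(x in A) f x <= \int[mu]_(x in B) f x)%E.
Proof.
move=> AB f0; rewrite (integral_mkcond A) (integral_mkcond B).
apply: le_int_nm => x _; rewrite /patch.
- case: ifP => //; rewrite inE => Ax; by apply: f0; exact: AB.
- have [xA|xA] := boolP (x \in A).
    by have -> : x \in B by rewrite inE; apply: AB; rewrite -inE.
  by case: ifP => //; rewrite inE => Bx; exact: f0.
Qed.

Lemma Stilde_ge0 (R : realType) (zeta : R -> {finite_measure set (ST R) -> \bar R}) t :
  0 <= Stilde zeta t.
Proof.
rewrite /Stilde; set E := [set s : R | _].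
have [[s Es]|nE] := pselect (exists s, E s).
  by apply: lb_le_inf; [exists s | move=> u [] ].
have -> : E = set0 by apply/seteqP; split => // u Eu; apply: nE; exists u.
by rewrite inf0.
Qed.

Lemma cc_sub (R : realType) (a b a' b' : R) : a' <= a -> b' <= b ->
  closed_corner a b `<=` closed_corner a' b'.
Proof.
move=> aa bb p [h1 h2]; split; [apply: le_trans h1 | apply: le_trans h2]; by rewrite lee_fin.
Qed.

Lemma cc_diff (R : realType) (mu : probability (ST R) R) (a b b' : R) : b <= b' ->
  fine (mu (closed_corner a b)) <= fine (mu (closed_corner a b')) +
    (fine (mu [set p | (b%:E <= p.2)%E]) - fine (mu [set p | (b'%:E <= p.2)%E])).
Proof.
move=> bb.
set A := closed_corner a b; set B := closed_corner a b'.
set H := [set p : ST R | (b%:E <= p.2)%E]; set H' := [set p : ST R | (b'%:E <= p.2)%E].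
have mA : measurable A by exact: cc_meas.
have mB : measurable B by exact: cc_meas.
have mH : measurable H.
  have -> : H = [set p : ST R | (-oo <= p.1)%E /\ (b%:E <= p.2)%E].
    by apply/seteqP; split => p /= [] //; rewrite leNye.
  exact: cc_meas.
have mH' : measurable H'.
  have -> : H' = [set p : ST R | (-oo <= p.1)%E /\ (b'%:E <= p.2)%E].
    by apply/seteqP; split => p /= [] //; rewrite leNye.
  exact: cc_meas.
have eA := measureDI mu mA mB.
have eH := measureDI mu mH mH'.
have eAB : A `&` B = B.
  by apply/seteqP; split => [p []//|p Bp]; split => //; apply: cc_sub Bp => //.
have eHH : H `&` H' = H'.
  apply/seteqP; split => [p []//|p Hp]; split => //; apply: le_trans Hp.
  by rewrite lee_fin.
rewrite eAB in eA; rewrite eHH in eH.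
have fin : forall X, measurable X -> mu X \is a fin_num.
  by move=> X mX; exact: fin_num_measure.
rewrite eA eH !fineD ?fin //; try exact: measurableD.
have : fine (mu (A `\` B)) <= fine (mu (H `\` H')).
  apply: fine_le; rewrite ?fin //; try exact: measurableD.
  apply: le_measure; rewrite ?inE; try exact: measurableD.
  move=> p [[h1 h2] nB]; split => //= h3; apply: nB; split => //.
lra.
Qed.

Lemma telesc (R : realType) (psi : nat -> R) :
  (forall i j, (i <= j)%N -> psi i <= psi j) -> (forall i, 0 <= psi i <= 1) ->
  forall K M, \sum_(j < M) (psi (j + K)%N - psi j) <= K%:R.
Proof.
move=> hmon hb K; elim: K psi hmon hb => [|K IH] psi hmon hb M.
  by rewrite big1 // => j _; rewrite addn0 subrr.
have -> : \sum_(j < M) (psi (j + K.+1)%N - psi j) =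
   \sum_(j < M) ((psi (j.+1 + K)%N - psi j.+1) + (psi j.+1 - psi j)).
  by apply: eq_bigr => j _; rewrite addnS -addSn addrA subrK.
rewrite big_split /= -(addn1 K) natrD lerD //.
  by apply: (IH (fun i => psi i.+1)) => // i j ij; apply: hmon.
rewrite -(big_mkord xpredT (fun j => psi j.+1 - psi j)) telescope_sumr //.
have /andP[_ h1] := hb M; have /andP[h0 _] := hb 0%N.
by rewrite -[1]subr0; apply: lerB.
Qed.

Lemma step_bound (R : realType) (phi : R -> R) :
  (forall u v, u <= v -> phi v <= phi u) -> (forall u, 0 <= phi u <= 1) ->
  forall (c d T h : R) (N : nat), 0 < h -> d = N%:R * h -> 0 <= T ->
  (\int[@lebesgue_measure R]_(s in `[0%R, T]) (phi (c - s) - phi (c + d - s))%:E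
     <= ((N.+1)%:R * h)%:E)%E.
Proof.
move=> phimon phib c d T h N h0 hd T0.
have d0 : 0 <= d by rewrite hd mulr_ge0 // ltW.
set M := (Num.truncn (T / h)).+1.
pose psi (i : nat) := phi (c + d - i%:R * h).
pose beta (j : nat) := psi (j + N.+1)%N - psi j.
pose J (j : nat) := [set` `[j%:R * h, j.+1%:R * h[].
have psimon : forall i j, (i <= j)%N -> psi i <= psi j.
  by move=> i j ij; apply: phimon; rewrite lerD2l lerN2 ler_pM2r // ler_nat.
have beta0 : forall j, 0 <= beta j.
  by move=> k; rewrite subr_ge0; apply: psimon; rewrite leq_addr.
have mJ : forall k, measurable (J k) by move=> k; exact: measurable_itv.
have key : forall s, [set` `[0, T]] s -> ((phi (c - s) - phi (c + d - s))%:E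
    <= \sum_(j < M) (beta j * \1_(J j) s)%:E)%E.
  move=> s; rewrite /= in_itv /= => /andP[s0 sT].
  have sh0 : 0 <= s / h by rewrite divr_ge0 // ltW.
  set j0 := Num.truncn (s / h).
  have j0M : (j0 < M)%N by rewrite ltnS Num.Theory.le_truncn // ler_pM2r ?invr_gt0.
  have /andP[j0l j0r] := Num.Theory.truncn_itv sh0.
  rewrite -/j0 ler_pdivlMr // in j0l; rewrite -/j0 ltr_pdivrMr // in j0r.
  rewrite (bigD1 (Ordinal j0M)) //= indicE.
  have -> : (s \in J j0) by rewrite inE /J /= in_itv /= j0l j0r.
  apply: le_trans (leeDl _ _); last by apply: sume_ge0 => j _; rewrite lee_fin mulr_ge0 // indicE ler0n.
  rewrite mulr1 lee_fin /beta /psi; apply: lerB; apply: phimon.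
    rewrite natrD hd -addn1 natrD; lra.
  lra.
have mk : measurable_fun [set` `[0, T]] (fun s => (phi (c - s) - phi (c + d - s))%:E).
  apply/measurable_EFinP.
  have := @measurable_funB _ _ _ [set` `[0, T]] (fun s => phi (c - s)) (fun s => phi (c + d - s)); apply.
    by apply: nondecreasing_measurable => // u v uv; apply: phimon; lra.
  by apply: nondecreasing_measurable => // u v uv; apply: phimon; lra.
have HH := ge0_le_integral (@lebesgue_measure R) _ _ mk _ key.
apply: le_trans (HH _ _ _) _.
- exact: measurable_itv.
- by move=> s; rewrite /= in_itv /= => /andP[s0 sT]; rewrite lee_fin subr_ge0; apply: phimon; lra.
- apply: emeasurable_sum => j; apply/measurable_EFinP.
  by apply: measurable_funM => //; apply: (@measurable_indic _ R); exact: mJ.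
rewrite ge0_integral_sum //; first last.
- by move=> j s _; rewrite lee_fin mulr_ge0 // indicE ler0n.
- move=> j; apply/measurable_EFinP.
  by apply: measurable_funM => //; apply: (@measurable_indic _ R); exact: mJ.
apply: le_trans (_ : (\sum_(j < M) (beta j * h)%:E <= _)%E).
  apply: lee_sum => j _.
  under eq_integral do rewrite EFinM.
  rewrite ge0_integralZl //; try (by rewrite lee_fin); try (by move=> s _; rewrite lee_fin indicE ler0n);
    try (by apply/measurable_EFinP; apply: (@measurable_indic _ R); exact: mJ); try exact: measurable_itv.
  rewrite integral_indic //; last exact: measurable_itv.
  rewrite EFinM; apply: lee_wpmul2l; first by rewrite lee_fin.
  have HL := le_measure (@lebesgue_measure R) _ _ (@subIsetl _ (J j) [set` `[0, T]]).
  apply: le_trans (HL _ _) _.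
  - by rewrite inE; apply: measurableI => //; exact: measurable_itv.
  - by rewrite inE; exact: measurable_itv.
  have LJ := @lebesgue_measure_itv R `[j%:R * h, j.+1%:R * h[.
  rewrite /= lte_fin ltr_pM2r // ltr_nat ltnSn in LJ.
  rewrite -EFinB -mulrBl -natrB // subSnn mul1r in LJ.
  by rewrite le_eqVlt; apply/orP; left; apply/eqP; exact: LJ.
rewrite sumEFin lee_fin -mulr_suml ler_pM2r //.
exact: (@telesc R psi psimon (fun i => phib _) N.+1 M).
Qed.

Lemma int_bound (R : realType) (phi : R -> R) :
  (forall u v, u <= v -> phi v <= phi u) -> (forall u, 0 <= phi u <= 1) ->
  forall (c d T : R), 0 <= d -> 0 <= T ->
  (\int[@lebesgue_measure R]_(s in `[0%R, T]) (phi (c - s) - phi (c + d - s))%:E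
     <= d%:E)%E.
Proof.
move=> phimon phib c d T d0 T0.
have [->|dn0] := eqVneq d 0.
  under eq_integral do rewrite addr0 subrr.
  by rewrite integral0.
have dp : 0 < d by rewrite lt_neqAle eq_sym dn0 d0.
apply/lee_addgt0Pr => e e0.
set N := (Num.truncn (d / e)).+1.
have Np : 0 < N%:R :> R by rewrite ltr0n.
have := @step_bound R phi phimon phib c d T (d / N%:R) N _ _ T0.
rewrite divr_gt0 // mulrCA divff ?mulr1 ?gt_eqF //.
move=> /(_ isT erefl) H; apply: le_trans H _.
rewrite -EFinD lee_fin -(addn1 N) natrD mulrDl mul1r mulrCA divff ?mulr1 ?gt_eqF //.
rewrite lerD2l ler_pdivrMr // -ler_pdivrMl // ltW //.
by rewrite mulrC; exact: Num.Theory.truncnS_gt.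
Qed.

Lemma mass_ge0 (R : realType) (zeta : R -> {finite_measure set (ST R) -> \bar R}) t :
  0 <= mass zeta t.
Proof. by rewrite /mass fine_ge0. Qed.

Lemma Iz_fin (R : realType) (zeta : R -> {finite_measure set (ST R) -> \bar R}) (m : R) :
  0 < m -> (forall t, 0 <= t -> m <= mass zeta t) ->
  forall u v : R, 0 <= u ->
  (\int[@lebesgue_measure R]_(s in `[u, v]) ((mass zeta s)^-1)%:E)%E \is a fin_num.
Proof.
move=> m0 hm u v u0.
rewrite ge0_fin_numE; last by apply: integral_ge0 => s _; rewrite lee_fin invr_ge0 mass_ge0.
apply: le_lt_trans (_ : (\int[@lebesgue_measure R]_(s in `[u, v]) (cst (m^-1)%:E s) < +oo)%E).
  apply: le_int_nm => s; rewrite /= in_itv /= => /andP[us sv].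
    by rewrite lee_fin invr_ge0 mass_ge0.
  rewrite lee_fin lef_pV2 ?posrE //; first by apply: hm; lra.
  by apply: lt_le_trans (hm s _); lra.
rewrite integral_cst //= lebesgue_measure_itv /=.
by case: ifP => _; rewrite ?mule0 // -EFinD -EFinM ltry.
Qed.

Lemma S_mono (R : realType) (zeta : R -> {finite_measure set (ST R) -> \bar R}) (m : R) :
  0 < m -> (forall t, 0 <= t -> m <= mass zeta t) ->
  forall u u' v : R, 0 <= u -> u <= u' -> Sfun zeta u' v <= Sfun zeta u v.
Proof.
move=> m0 hm u u' v u0 uu; rewrite /Sfun; apply: fine_le.
- by apply: (@Iz_fin R zeta m m0 hm); lra.
- exact: (@Iz_fin R zeta m m0 hm).
apply: sub_int_nm.
  by move=> s /=; rewrite !in_itv /= => /andP[? ?]; apply/andP; split => //; lra.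
by move=> s _; rewrite lee_fin invr_ge0 mass_ge0.
Qed.

Lemma S_ge0 (R : realType) (zeta : R -> {finite_measure set (ST R) -> \bar R}) u v :
  0 <= Sfun zeta u v.
Proof.
rewrite /Sfun fine_ge0 //; apply: integral_ge0 => s _.
by rewrite lee_fin invr_ge0 mass_ge0.
Qed.

Theorem mainTheorem9 (R : realType) (lambda : R)
  (theta : probability (ST R) R) (zeta0 : {finite_measure set (ST R) -> \bar R})
  (L : R)
  (zeta : R -> {finite_measure set (ST R) -> \bar R}) :
  fluid_data lambda theta zeta0 ->
  (0 < fine (zeta0 setT)) ->
  (forall x y y' : R, 0 <= x -> 0 <= y -> 0 <= y' ->
     `| fine (zeta0 (closed_corner x y)) / fine (zeta0 setT)
      - fine (zeta0 (closed_corner x y')) / fine (zeta0 setT) |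
     <= L * `|y - y'|) ->
  fluid_solution lambda theta zeta0 zeta ->
  forall x y y' t : R, 0 <= x -> 0 <= y -> 0 <= y' -> 0 <= t ->
    `| fine (zeta (Stilde zeta t) (closed_corner x y))
     - fine (zeta (Stilde zeta t) (closed_corner x y')) |
    <= (fine (zeta0 setT) * L + lambda) * `|y - y'|.
Proof.
move=> fd z0p hL fs x y y' t x0 y0 y0' t0.
have [m [m0 hm]] := @mass_lb R lambda theta zeta0 zeta fd z0p fs.
move: (fd) (fs) => [lam0 _] [hsupp [hwc [hlow heq]]].
set T := Stilde zeta t.
have T0 : 0 <= T := @Stilde_ge0 R zeta t.
pose cl s := if s < 0 then 0 else if T < s then T else s.
have cl_mon : forall s s', s <= s' -> cl s <= cl s'.
  move=> s s' ss; rewrite /cl.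
  by case: (ltP s 0) => h1; case: (ltP T s) => h2; case: (ltP s' 0) => h3;
    case: (ltP T s') => h4; lra.
have cl_id : forall s, 0 <= s -> s <= T -> cl s = s.
  move=> s s0 sT; rewrite /cl.
  by case: (ltP s 0) => h1; case: (ltP T s) => h2 //; lra.
have cl_ge0 : forall s, 0 <= cl s.
  by move=> s; rewrite /cl; case: (ltP s 0) => h1; case: (ltP T s) => h2 //; lra.
pose S' s := Sfun zeta (cl s) T.
have S'mon : forall s s', s <= s' -> S' s' <= S' s.
  by move=> s s' ss; apply: (@S_mono R zeta m m0 hm) => //; exact: cl_mon.
have fin : forall X, measurable X -> theta X \is a fin_num.
  by move=> X mX; exact: fin_num_measure.
have mcc : forall a b : R, measurable (closed_corner a b) by move=> a b; exact: cc_meas.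
pose g y1 s := fine (theta (closed_corner (x + S' s) (y1 + (T - s)))).
have gmon : forall y1 s s', s <= s' -> g y1 s <= g y1 s'.
  move=> y1 s s' ss; apply: fine_le; rewrite ?fin //.
  apply: le_measure; rewrite ?inE //; apply: cc_sub.
    by rewrite lerD2l; exact: S'mon.
  lra.
have gb : forall y1 s, 0 <= g y1 s <= 1.
  move=> y1 s; rewrite fine_ge0 ?measure_ge0 //=.
  by rewrite -lee_fin fineK ?fin // probability_le1.
have gmeas : forall y1, measurable_fun [set` `[0, T]] (fun s => (g y1 s)%:E).
  move=> y1; apply/measurable_EFinP; apply: nondecreasing_measurable => //.
  by move=> s s' ss; exact: gmon.
have Ieq : forall y1, 0 <= y1 -> zeta T (closed_corner x y1) =
    (zeta0 (closed_corner (x + Sfun zeta 0 T) (y1 + T)) +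
     lambda%:E * \int[@lebesgue_measure R]_(s in `[0%R, T]) (g y1 s)%:E)%E.
  move=> y1 y10; rewrite heq; last 2 first. exact: corner_cc. exact: T0. rewrite shift_cc.
  congr (_ + lambda%:E * _)%E; apply: eq_integral => s.
  rewrite inE /= in_itv /= => /andP[s0 sT].
  by rewrite shift_cc /g /S' cl_id // fineK ?fin.
have Ifin : forall y1, (\int[@lebesgue_measure R]_(s in `[0%R, T]) (g y1 s)%:E)%E \is a fin_num.
  move=> y1; rewrite ge0_fin_numE; last first.
    by apply: integral_ge0 => s _; rewrite lee_fin; case/andP: (gb y1 s).
  apply: le_lt_trans (_ : (\int[@lebesgue_measure R]_(s in `[0%R, T]) (cst 1%:E s) < +oo)%E).
    apply: le_int_nm => s _; rewrite lee_fin; by case/andP: (gb y1 s).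
  rewrite integral_cst //= lebesgue_measure_itv /=.
  by case: ifP => _; rewrite ?mule0 // mul1e -EFinD ltry.
pose I y1 := fine (\int[@lebesgue_measure R]_(s in `[0%R, T]) (g y1 s)%:E)%E.
pose a y1 := fine (zeta0 (closed_corner (x + Sfun zeta 0 T) (y1 + T))).
have Zeq : forall y1, 0 <= y1 -> fine (zeta T (closed_corner x y1)) = a y1 + lambda * I y1.
  move=> y1 y10; rewrite Ieq // fineD ?fineM //.
  - exact: fin_num_measure.
  - by rewrite fin_numM.
pose phi v := fine (theta [set p : ST R | (v%:E <= p.2)%E]).
have mH : forall v : R, measurable [set p : ST R | (v%:E <= p.2)%E].
  move=> v; have -> : [set p : ST R | (v%:E <= p.2)%E] =
      [set p : ST R | (-oo <= p.1)%E /\ (v%:E <= p.2)%E].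
    by apply/seteqP; split => p /= [] //; rewrite leNye.
  exact: cc_meas.
have phimon : forall u v, u <= v -> phi v <= phi u.
  move=> u v uv; apply: fine_le; rewrite ?fin //.
  apply: le_measure; rewrite ?inE // => p /= h; apply: le_trans h; by rewrite lee_fin.
have phib : forall u, 0 <= phi u <= 1.
  move=> u; rewrite fine_ge0 ?measure_ge0 //=.
  by rewrite -lee_fin fineK ?fin // probability_le1.
have Imon : forall y1 y2, 0 <= y1 -> y1 <= y2 -> I y2 <= I y1 /\ I y1 <= I y2 + (y2 - y1).
  move=> y1 y2 y10 y12; split.
    apply: fine_le; rewrite ?Ifin //; apply: le_int_nm => s _.
      by rewrite lee_fin; case/andP: (gb y2 s).
    rewrite lee_fin; apply: fine_le; rewrite ?fin //.
    by apply: le_measure; rewrite ?inE //; apply: cc_sub => //; lra.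
  set c := y1 + T; set d := y2 - y1.
  have d0 : 0 <= d by rewrite /d subr_ge0.
  have H : (\int[@lebesgue_measure R]_(s in `[0%R, T]) (g y1 s)%:E <=
     \int[@lebesgue_measure R]_(s in `[0%R, T]) ((g y2 s)%:E + (phi (c - s) - phi (c + d - s))%:E))%E.
    apply: le_int_nm => s _.
      by rewrite lee_fin; case/andP: (gb y1 s).
    rewrite -EFinD lee_fin.
    have e1 : c - s = y1 + (T - s) by rewrite /c; ring.
    have e2 : c + d - s = y2 + (T - s) by rewrite /c /d; ring.
    rewrite e1 e2 /g; apply: cc_diff; lra.
  have mk : measurable_fun [set` `[0, T]] (fun s => (phi (c - s) - phi (c + d - s))%:E).
    apply/measurable_EFinP.
    have := @measurable_funB _ _ _ [set` `[0, T]] (fun s => phi (c - s)) (fun s => phi (c + d - s)); apply.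
      by apply: nondecreasing_measurable => // u v uv; apply: phimon; lra.
    by apply: nondecreasing_measurable => // u v uv; apply: phimon; lra.
  have k0 : forall s, [set` `[0, T]] s -> (0 <= (phi (c - s) - phi (c + d - s))%:E)%E.
    by move=> s _; rewrite lee_fin subr_ge0; apply: phimon; lra.
  have g0 : forall s, [set` `[0, T]] s -> (0 <= (g y2 s)%:E)%E.
    by move=> s _; rewrite lee_fin; case/andP: (gb y2 s).
  rewrite ge0_integralD // in H; try (exact: gmeas); try (exact: mk).
  have Hk := @int_bound R phi phimon phib c d T d0 T0.
  have H2 := le_trans H (leeD2l _ Hk).
  move: H2; rewrite -(fineK (Ifin y1)) -(fineK (Ifin y2)) -EFinD lee_fin.
  by [].
set m0' := fine (zeta0 setT).
have Ib : `|I y - I y'| <= `|y - y'|.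
  have [yy|yy] := leP y y'.
    have [h1 h2] := Imon y y' y0 yy.
    have -> : `|y - y'| = y' - y by rewrite distrC ger0_norm // subr_ge0.
    rewrite ler_norml; apply/andP; split; lra.
  have [h1 h2] := Imon y' y y0' (ltW yy).
  have -> : `|y - y'| = y - y' by rewrite ger0_norm // subr_ge0 ltW.
  rewrite ler_norml; apply/andP; split; lra.
have Ab : `|a y - a y'| <= m0' * L * `|y - y'|.
  have xS : 0 <= x + Sfun zeta 0 T by rewrite addr_ge0 // S_ge0.
  have H := hL (x + Sfun zeta 0 T) (y + T) (y' + T) xS (addr_ge0 y0 T0) (addr_ge0 y0' T0).
  rewrite -mulrBl normrM (gtr0_norm (x := m0'^-1)) ?invr_gt0 // in H.
  have e : y + T - (y' + T) = y - y' by ring.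
  rewrite e ler_pdivrMr // in H.
  apply: le_trans H _; rewrite le_eqVlt; apply/orP; left; apply/eqP; ring.
rewrite !Zeq //.
have -> : a y + lambda * I y - (a y' + lambda * I y') = (a y - a y') + lambda * (I y - I y') by ring.
apply: le_trans (ler_normD _ _) _.
rewrite normrM (ger0_norm (ltW lam0)) mulrDl.
apply: lerD => //.
by rewrite ler_pM2l.
Qed.
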